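(* Under the Setting below, for every $k\ge 0$ the iterates of Algorithm 1 satisfy $y^{k+1}\in X$, $\|y^{k+1}\|_0\le\|x^k\|_0$, $f(y^{k+1})\le f(x^k)$, and $$H(x^{k+1})+\frac{\mu}{2}\|x^{k+1}-y^{k+1}\|^2\le H(x^k).$$
   Context: Setting. Let $\lambda>0$, $l,u\in\mathbb{R}^n$ with $l\le u$ componentwise, $X=\{x\in\mathbb{R}^n: l\le x\le u\}$, and $\delta_X$ the indicator function of $X$ ($0$ on $X$, $+\infty$ outside). For $x\in\mathbb{R}^n$, $\|x\|_0$ is the number of nonzero components of $x$ and $I(x)=\{i: x_i=0\}$. Let $f:\mathbb{R}^n\to\mathbb{R}$ be convex and differentiable, bounded from below on $X$, with $\nabla f$ $L$-Lipschitz continuous on $X$ ($L>0$). Define $H(x)=\lambda\|x\|_0+f(x)+\delta_X(x)$. Algorithm 1. Choose $\mu>0$, extrapolation weights $0\le\omega_k\le\omega<1$, and a starting point $x^0\in X$; set $x^{-1}=x^0$. For $k=0,1,2,\dots$: define $y^{k+1}\in\mathbb{R}^n$ by $y^{k+1}_i=x^k_i+\omega_k(x^k_i-x^{k-1}_i)$ for $i\notin I(x^k)$ and $y^{k+1}_i=x^k_i\,(=0)$ for $i\in I(x^k)$ (extrapolation only on the support of $x^k$); if $\langle y^{k+1}-x^k,\nabla f(y^{k+1})\rangle>0$ or $y^{k+1}\notin X$, reset $y^{k+1}:=x^k$; then take any $$x^{k+1}\in\arg\min_{x\in X}\ \lambda\|x\|_0+\frac{L}{2}\Big\|x-y^{k+1}+\frac1L\nabla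 f(y^{k+1})\Big\|^2+\frac{\mu}{2}\|x-y^{k+1}\|^2 .$$ *)

(* Defs.v *)
From Stdlib Require Import Reals.
From mathcomp Require Import all_boot.
Set Implicit Arguments. Unset Strict Implicit. Unset Printing Implicit Defensive.

Local Open Scope R_scope.

Definition vec (n : nat) := 'I_n -> R.

Definition vadd n (x y : vec n) : vec n := fun i => x i + y i.
Definition vsub n (x y : vec n) : vec n := fun i => x i - y i.
Definition vscale n (a : R) (x : vec n) : vec n := fun i => a * x i.

Definition inner n (x y : vec n) : R := \big[Rplus/0]_(i < n) (x i * y i).
Definition norm n (x : vec n) : R := sqrt (inner x x).

Definition Req_b (a b : R) : bool := if Req_EM_T a b then true else false.
Definition l0 n (x : vec n) : nat := (\sum_(i < n) (if Req_b (x i) 0 then 0 else 1))%N.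

Definition zero_idx n (x : vec n) (i : 'I_n) : Prop := x i = 0.

Definition in_box n (l u x : vec n) : Prop := forall i, l i <= x i <= u i.
Definition Rle_b (a b : R) : bool := if Rle_dec a b then true else false.
Definition in_box_b n (l u x : vec n) : bool :=
  [forall i, Rle_b (l i) (x i) && Rle_b (x i) (u i)].

(* extended reals (values in R ∪ {+oo}) for H, which contains delta_X *)
Inductive ereal := Fin (r : R) | PInf.
Definition ele (a b : ereal) : Prop :=
  match a, b with
  | _, PInf => True
  | PInf, Fin _ => False
  | Fin r, Fin s => r <= s
  end.
Definition eadd (a : ereal) (r : R) : ereal :=
  match a with Fin s => Fin (s + r) | PInf => PInf end.

Definition Hfun n (lam : R) (f : vec n -> R) (l u : vec n) (x : vec n) : ereal :=
  if in_box_b l u x then Fin (lam * INR (l0 x) + f x) else PInf.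

Definition convex_fun n (f : vec n -> R) : Prop :=
  forall (x y : vec n) (t : R), 0 <= t <= 1 ->
    f (vadd (vscale t x) (vscale (1 - t) y)) <= t * f x + (1 - t) * f y.

Definition has_gradient n (f : vec n -> R) (g : vec n -> vec n) : Prop :=
  forall x : vec n, forall eps : R, 0 < eps -> exists delta : R, 0 < delta /\
    forall y : vec n, norm (vsub y x) < delta ->
      Rabs (f y - f x - inner (g x) (vsub y x)) <= eps * norm (vsub y x).

(* objective of the subproblem defining x^{k+1} (without delta_X) *)
Definition subobj n (lam L mu : R) (g : vec n -> vec n) (y x : vec n) : R :=
  lam * INR (l0 x)
  + L / 2 * (norm (fun i => x i - y i + / L * g y i)) ^ 2
  + mu / 2 * (norm (vsub x y)) ^ 2.

(* the extrapolated point before the safeguard: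
   ytilde_i = xk_i + w (xk_i - xkm1_i) if xk_i <> 0, and xk_i otherwise *)
Definition extrap n (w : R) (xk xkm1 : vec n) : vec n :=
  fun i => if Req_b (xk i) 0 then xk i else xk i + w * (xk i - xkm1 i).

(* Main.v *)
Require Import Defs.
From Stdlib Require Import Reals Lra Psatz Classical FunctionalExtensionality.
From mathcomp Require Import all_boot.
Set Implicit Arguments. Unset Strict Implicit.
Local Open Scope R_scope.

Section S.
Variable n : nat.
Definition Ssum (F : 'I_n -> R) := \big[Rplus/0]_(i < n) F i.

Lemma S_ext F G : (forall i, F i = G i) -> Ssum F = Ssum G.
Proof. move=> H; apply: eq_bigr => i _; exact: H. Qed.

Lemma S_add F G : Ssum (fun i => F i + G i) = Ssum F + Ssum G.
Proof.
rewrite /Ssum; apply: (big_rec3 (fun a b c => a = b + c)); first lra.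
move=> i a b c _ ->; lra.
Qed.

Lemma S_scal c F : Ssum (fun i => c * F i) = c * Ssum F.
Proof.
rewrite /Ssum; apply: (big_rec2 (fun a b => a = c * b)); first lra.
move=> i a b _ ->; lra.
Qed.

Lemma S_le F G : (forall i, F i <= G i) -> Ssum F <= Ssum G.
Proof.
move=> H; rewrite /Ssum; apply: (big_rec2 (fun a b => a <= b)); first lra.
move=> i a b _ Hab; have := H i; lra.
Qed.

Lemma S_ge0 F : (forall i, 0 <= F i) -> 0 <= Ssum F.
Proof.
move=> H; rewrite /Ssum; apply: (big_rec (fun a => 0 <= a)); first lra.
move=> i a _ Ha; have := H i; lra.
Qed.
Lemma S_lin3 F a G b H : Ssum (fun i => F i + a * G i + b * H i) = Ssum F + a * Ssum G + b * Ssum H.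
Proof.
rewrite (@S_add (fun i => F i + a * G i)) S_add !S_scal //.
Qed.
End S.

Lemma inner_S n (x y : vec n) : inner x y = Ssum (fun i => x i * y i).
Proof. by []. Qed.

Lemma inner_xx_ge0 n (x : vec n) : 0 <= inner x x.
Proof. rewrite inner_S; apply: S_ge0 => i; nra. Qed.

Lemma norm_sq n (x : vec n) : norm x ^ 2 = inner x x.
Proof. rewrite /norm pow2_sqrt //; exact: inner_xx_ge0. Qed.

Lemma inner_sym n (x y : vec n) : inner x y = inner y x.
Proof. rewrite !inner_S; apply: S_ext => i; lra. Qed.

Lemma CS n (u v : vec n) : inner u v <= norm u * norm v.
Proof.
set a := inner u u; set b := inner u v; set c := inner v v.
have key : forall t, 0 <= a - 2 * t * b + t ^ 2 * c.
  move=> t.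
  have -> : a - 2 * t * b + t ^ 2 * c = inner (fun i => u i - t * v i) (fun i => u i - t * v i).
    rewrite /a /b /c !inner_S.
    rewrite (@S_ext _ (fun i => (u i - t * v i) * (u i - t * v i)) (fun i => u i * u i + (-2 * t) * (u i * v i) + t ^ 2 * (v i * v i))); last by move=> i; ring.
    rewrite S_lin3; ring.
  exact: inner_xx_ge0.
have ha : 0 <= a by exact: inner_xx_ge0.
have hc : 0 <= c by exact: inner_xx_ge0.
have hb2 : b ^ 2 <= a * c.
  case: (Req_dec c 0) => hc0.
    case: (Req_dec b 0) => hb0; first by rewrite hb0 hc0; lra.
    have := key ((a + 1) / (2 * b)); rewrite hc0.
    have -> : a - 2 * ((a + 1) / (2 * b)) * b + ((a + 1) / (2 * b)) ^ 2 * 0 = -1 by field.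
    lra.
  have := key (b / c).
  have -> : a - 2 * (b / c) * b + (b / c) ^ 2 * c = (a * c - b ^ 2) / c by field.
  move=> h.
  have hcp : 0 < c by lra.
  have : 0 <= (a * c - b ^ 2) / c * c by nra.
  have -> : (a * c - b ^ 2) / c * c = a * c - b ^ 2 by field.
  lra.
rewrite /norm -sqrt_mult // -/a -/c; clearbody a b c.
case: (Rle_lt_dec b 0) => hb; first by have := sqrt_pos (a * c); lra.
rewrite -(sqrt_pow2 b); last lra.
apply: sqrt_le_1_alt; lra.
Qed.

Lemma inner_ext n (x x' y y' : vec n) : (forall i, x i = x' i) -> (forall i, y i = y' i) ->
  inner x y = inner x' y'.
Proof. move=> h1 h2; rewrite !inner_S; apply: S_ext => i; by rewrite h1 h2. Qed.

Lemma norm_ext n (x x' : vec n) : (forall i, x i = x' i) -> norm x = norm x'.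
Proof. move=> h; rewrite /norm (inner_ext h h) //. Qed.

Lemma norm_scal n c (d : vec n) : norm (fun i => c * d i) = Rabs c * norm d.
Proof.
rewrite /norm inner_S (@S_ext _ _ (fun i => (c * c) * (d i * d i))); last by move=> i; ring.
rewrite S_scal -inner_S sqrt_mult; [|nra|exact: inner_xx_ge0].
by rewrite -sqrt_Rsqr_abs.
Qed.

Lemma norm_ge0 n (d : vec n) : 0 <= norm d.
Proof. exact: sqrt_pos. Qed.

Lemma inner_scal_r n c (x d : vec n) : inner x (fun i => c * d i) = c * inner x d.
Proof.
rewrite !inner_S -S_scal; apply: S_ext => i; ring.
Qed.

Lemma line_deriv n (f : vec n -> R) g (Hg : has_gradient f g) (a d : vec n) t :
  derivable_pt_lim (fun s => f (fun i => a i + s * d i)) t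
     (inner (g (fun i => a i + t * d i)) d).
Proof.
move=> eps heps.
set p := (fun i => a i + t * d i).
have hd := norm_ge0 d.
have [delta0 [hdel0 H]] := Hg p (eps / (2 * (norm d + 1))) ltac:(apply: Rdiv_lt_0_compat; lra).
have hdp : 0 < delta0 / (norm d + 1) by apply: Rdiv_lt_0_compat; lra.
exists (mkposreal _ hdp) => h hh0 /= hh.
have eqv : forall i, vsub (fun i => a i + (t + h) * d i) p i = h * d i.
  by move=> i; rewrite /vsub /p; ring.
have := H (fun i => a i + (t + h) * d i).
rewrite (norm_ext eqv) (inner_ext (fun i => erefl) eqv) inner_scal_r norm_scal.
have hah : 0 < Rabs h by apply: Rabs_pos_lt.
have hlt : Rabs h * norm d < delta0.
  have : Rabs h * (norm d + 1) < delta0.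
    have := Rmult_lt_compat_r (norm d + 1) _ _ ltac:(lra) hh.
    have -> : delta0 / (norm d + 1) * (norm d + 1) = delta0 by field; lra.
    done.
  nra.
move/(_ hlt) => Hb.
set D := inner (g p) d in Hb *.
set A := f (fun i => a i + (t + h) * d i) in Hb *.
set B := f (fun i => a i + t * d i) in Hb *.
have -> : (A - B) / h - D = (A - B - h * D) / h by field.
rewrite /Rdiv Rabs_mult Rabs_inv.
apply: (Rmult_lt_reg_r (Rabs h)) => //.
have -> : Rabs (A - B - h * D) * / Rabs h * Rabs h = Rabs (A - B - h * D) by field; lra.
apply: (Rle_lt_trans _ _ _ Hb).
have e1 : eps / (2 * (norm d + 1)) * (Rabs h * norm d) = (eps * Rabs h) * (norm d / (2 * (norm d + 1))) by field; lra.
rewrite e1.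
have : norm d / (2 * (norm d + 1)) < 1.
  apply: (Rmult_lt_reg_r (2 * (norm d + 1))); first lra.
  have -> : norm d / (2 * (norm d + 1)) * (2 * (norm d + 1)) = norm d by field; lra.
  lra.
have : 0 <= norm d / (2 * (norm d + 1)) by apply: Rmult_le_pos; [lra| apply: Rlt_le; apply: Rinv_0_lt_compat; lra].
move=> hq0 hq1; have := Rmult_lt_0_compat _ _ heps hah; move: hq0 hq1; set q := norm d / _; set e := eps * Rabs h; clearbody q e; nra.
Qed.

Lemma inner_sub_l n (x y d : vec n) : inner (vsub x y) d = inner x d - inner y d.
Proof.
have -> : inner x d - inner y d = inner x d + (-1) * inner y d by ring.
rewrite !inner_S -S_scal -S_add; apply: S_ext => i; rewrite /vsub; ring.
Qed.

Lemma conv_first n (f : vec n -> R) g (Hc : convex_fun f) (Hg : has_gradient f g) (a b : vec n) :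
  f a + inner (g a) (vsub b a) <= f b.
Proof.
set d := vsub b a.
set h := fun s => f (fun i => a i + s * d i).
have h0 : h 0 = f a by rewrite /h; congr f; apply: functional_extensionality => i; ring.
have hc : forall s, 0 <= s <= 1 -> h s <= s * f b + (1 - s) * f a.
  move=> s hs; rewrite /h.
  have -> : (fun i => a i + s * d i) = vadd (vscale s b) (vscale (1 - s) a).
    apply: functional_extensionality => i; rewrite /vadd /vscale /d /vsub; ring.
  exact: Hc.
have hD := line_deriv Hg a d 0.
have e0 : (fun i => a i + 0 * d i) = a by apply: functional_extensionality => i; ring.
rewrite e0 in hD.
fold h in hD.
set D := inner (g a) d in hD *.
apply: Rnot_lt_le => hlt.
have heps : 0 < (f a + D - f b) / 2 by lra.
have [[del hdel] Hd] := hD _ heps.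
set s := Rmin (del / 2) (1 / 2).
have hs0 : 0 < s by apply: Rmin_pos; lra.
have hs1 : s <= 1 / 2 by apply: Rmin_r.
have hsd : s <= del / 2 by apply: Rmin_l.
have := Hd s ltac:(lra) ltac:(rewrite /= Rabs_pos_eq; lra).
rewrite Rplus_0_l h0 => Hb.
have := hc s ltac:(lra).
have hq : (h s - f a) / s <= f b - f a.
  apply: (Rmult_le_reg_r s) => //.
  have -> : (h s - f a) / s * s = h s - f a by field; lra.
  have := hc s ltac:(lra); nra.
have := Rle_abs ((h s - f a) / s - D).
have := Rle_abs (-((h s - f a) / s - D)); rewrite Rabs_Ropp.
lra.
Qed.

Lemma descent n (f : vec n -> R) g (Hg : has_gradient f g) (l u : vec n) L :
  0 < L ->
  (forall z1 z2, in_box l u z1 -> in_box l u z2 ->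
     norm (vsub (g z1) (g z2)) <= L * norm (vsub z1 z2)) ->
  forall y x, in_box l u y -> in_box l u x ->
  f x <= f y + inner (g y) (vsub x y) + L / 2 * inner (vsub x y) (vsub x y).
Proof.
move=> hL HL y x hy hx.
set d := vsub x y.
set A := inner (g y) d.
set B := inner d d.
set c := L / 2 * B.
set h := fun s => f (fun i => y i + s * d i).
set phi := fun s => h s - (A * s + c * (s * s)).
set phi' := fun s => inner (g (fun i => y i + s * d i)) d - (A * 1 + c * (1 * s + s * 1)).
have Hd : forall s, 0 <= s <= 1 -> derivable_pt_lim phi s (phi' s).
  move=> s _.
  apply: (derivable_pt_lim_minus h (fun s => A * s + c * (s * s))).
    exact: line_deriv.
  apply: (derivable_pt_lim_plus (mult_real_fct A id) (mult_real_fct c (mult_fct id id))).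
    apply: derivable_pt_lim_scal; exact: derivable_pt_lim_id.
  apply: derivable_pt_lim_scal; apply: derivable_pt_lim_mult; exact: derivable_pt_lim_id.
have [s [Hs Hsr]] := MVT_cor2 phi phi' 0 1 Rlt_0_1 Hd.
have hB : 0 <= B by exact: inner_xx_ge0.
have hneg : phi' s <= 0.
  rewrite /phi'.
  set p := (fun i => y i + s * d i).
  have hp : in_box l u p.
    move=> i; rewrite /p /d /vsub; have := hy i; have := hx i; nra.
  have e : inner (g p) d = inner (vsub (g p) (g y)) d + A by rewrite inner_sub_l /A; ring.
  rewrite e.
  have := CS (vsub (g p) (g y)) d.
  have := HL p y hp hy.
  have ep : norm (vsub p y) = s * norm d.
    rewrite (@norm_ext _ _ (fun i => s * d i)); last by move=> i; rewrite /vsub /p; ring.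
    rewrite norm_scal Rabs_pos_eq //; lra.
  rewrite ep.
  have nB : norm d * norm d = B by rewrite /B -norm_sq; ring.
  have := norm_ge0 d.
  have := norm_ge0 (vsub (g p) (g y)).
  rewrite /c.
  move: nB; set nd := norm d; set ng := norm (vsub (g p) (g y)); set I := inner (vsub (g p) (g y)) d.
  clearbody nd ng I.
  nra.
have h0 : phi 0 = f y.
  rewrite /phi /h; have -> : (fun i => y i + 0 * d i) = y by apply: functional_extensionality => i; ring.
  ring.
have h1 : phi 1 = f x - (A + c).
  rewrite /phi /h; have -> : (fun i => y i + 1 * d i) = x by apply: functional_extensionality => i; rewrite /d /vsub; ring.
  ring.
rewrite h0 h1 in Hs.
idtac.
move: Hs hneg; rewrite /c /B /A; set P := phi' s; clearbody P; lra.
Qed.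

Lemma Req_b_true a b : Req_b a b = true <-> a = b.
Proof. rewrite /Req_b; case: Req_EM_T => //. Qed.

Lemma in_box_bT n (l u x : vec n) : in_box l u x -> in_box_b l u x = true.
Proof.
move=> h; apply/forallP => i; have := h i; rewrite /Rle_b.
case: Rle_dec; case: Rle_dec => //= ? ?; lra.
Qed.

Lemma expand_sq n (z y q : vec n) c :
  norm (fun i => z i - y i + c * q i) ^ 2 =
  inner (vsub z y) (vsub z y) + (2 * c) * inner (vsub z y) q + (c ^ 2) * inner q q.
Proof.
rewrite norm_sq !inner_S.
rewrite (@S_ext _ _ (fun i => vsub z y i * vsub z y i + (2 * c) * (vsub z y i * q i) + (c ^ 2) * (q i * q i))).
  by rewrite S_lin3.
move=> i; rewrite /vsub; ring.
Qed.

Lemma inner_sub_swap n (a b c : vec n) : inner (vsub a b) c = - inner (vsub b a) c.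
Proof. rewrite !inner_sub_l; ring. Qed.

Lemma inner_zero n (y c : vec n) : inner (vsub y y) c = 0.
Proof. rewrite inner_sub_l; ring. Qed.
Unset Implicit Arguments.

Theorem mainTheorem2 (n : nat) (lam L mu wbar : R) (l u : vec n)
  (f : vec n -> R) (g : vec n -> vec n)
  (om : nat -> R) (x y : nat -> vec n) :
  0 < lam ->
  (forall i, l i <= u i) ->
  convex_fun f ->
  has_gradient f g ->
  (exists m : R, forall z, in_box l u z -> m <= f z) ->
  0 < L ->
  (forall z1 z2, in_box l u z1 -> in_box l u z2 ->
     norm (vsub (g z1) (g z2)) <= L * norm (vsub z1 z2)) ->
  0 < mu ->
  wbar < 1 ->
  (forall k, 0 <= om k <= wbar) ->
  in_box l u (x 0%nat) ->
  (forall k : nat,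
     let xprev := if k is k'.+1 then x k' else x 0%nat in
     let yt := extrap (om k) (x k) xprev in
     ((inner (vsub yt (x k)) (g yt) > 0 \/ ~ in_box l u yt) -> y k.+1 = x k) /\
     (~ (inner (vsub yt (x k)) (g yt) > 0 \/ ~ in_box l u yt) -> y k.+1 = yt)) ->
  (forall k : nat,
     in_box l u (x k.+1) /\
     forall z, in_box l u z ->
       subobj lam L mu g (y k.+1) (x k.+1) <= subobj lam L mu g (y k.+1) z) ->
  forall k : nat,
    in_box l u (y k.+1) /\
    (l0 (y k.+1) <= l0 (x k))%N /\
    f (y k.+1) <= f (x k) /\
    ele (eadd (Hfun lam f l u (x k.+1)) (mu / 2 * (norm (vsub (x k.+1) (y k.+1))) ^ 2))
        (Hfun lam f l u (x k)).
Proof.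
move=> hlam hlu Hc Hg _ hL HL hmu _ _ hx0 Hy Hx k.
have xbox : forall k, in_box l u (x k) by case=> [|k'] //; case: (Hx k').
have [Hy1 Hy2] := Hy k.
move: Hy1 Hy2.
set xp := (if k is k'.+1 then x k' else x 0%nat).
set yt := extrap (om k) (x k) xp.
move=> Hy1 Hy2.
have [ykbox [yl0 yf]] : in_box l u (y k.+1) /\ (l0 (y k.+1) <= l0 (x k))%N /\ f (y k.+1) <= f (x k).
  case: (classic (inner (vsub yt (x k)) (g yt) > 0 \/ ~ in_box l u yt)) => hc.
    rewrite (Hy1 hc); split; [exact: xbox | split; [exact: leqnn | lra]].
  rewrite (Hy2 hc).
  have hin : inner (vsub yt (x k)) (g yt) <= 0 by lra.
  have hb : in_box l u yt by apply: NNPP => hn; apply: hc; right.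
  split; first exact: hb.
  split.
    rewrite /l0; apply: leq_sum => i _.
    case E: (Req_b (x k i) 0); last by case: Req_b.
    have : Req_b (yt i) 0 = true.
      apply/Req_b_true; rewrite /yt /extrap E; exact/Req_b_true.
    by move=> ->.
  have := conv_first Hc Hg yt (x k).
  rewrite inner_sym inner_sub_swap; lra.
split; first exact: ykbox.
split; first exact: yl0.
split; first exact: yf.
have [x1box Hopt] := Hx k.
rewrite /Hfun (in_box_bT x1box) (in_box_bT (xbox k)) /=.
have := Hopt _ ykbox.
rewrite /subobj !expand_sq !inner_zero.
have hd := descent Hg hL HL ykbox x1box.
have := le_INR _ _ (elimT leP yl0).
move: hd.
set Y := y k.+1; set X1 := x k.+1.
have nsq : norm (vsub X1 Y) * (norm (vsub X1 Y) * 1) = inner (vsub X1 Y) (vsub X1 Y) by rewrite -norm_sq /=.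
rewrite nsq.
set D := inner (vsub X1 Y) (vsub X1 Y).
set G := inner (g Y) (g Y).
rewrite (inner_sym (vsub X1 Y) (g Y)).
set P := inner (g Y) (vsub X1 Y).
have hnorm0 : norm (vsub Y Y) = 0.
  rewrite /norm inner_zero sqrt_0 //.
rewrite hnorm0.
set a1 := INR (l0 X1); set a2 := INR (l0 Y); set a3 := INR (l0 (x k)).
have e1 : L / 2 * (D + 2 * / L * P + (/ L) ^ 2 * G) = L / 2 * D + P + / L / 2 * G by field; lra.
have e2 : L / 2 * (0 + 2 * / L * 0 + (/ L) ^ 2 * G) = / L / 2 * G by field; lra.
rewrite e1 e2.
move=> hd h1 h2.
rewrite norm_sq -/D in h2. have : lam * a2 <= lam * a3 by apply: Rmult_le_compat_l; lra. move: yf; rewrite -/Y. lra.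
Qed.
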